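(* Let $(\mathbf L,\mathbf R)$ and $(\mathbf L',\mathbf R')$ be two pairs ($k\times n$ and $n\times k$, entries in a field $K$) with all maximal minors of $\mathbf R$ and of $\mathbf R'$ nonzero and with the same minor products: $h(\mathcal J):=\Delta_{\mathbf L}(\mathcal J)\Delta_{\mathbf R}(\mathcal J)=\Delta_{\mathbf L'}(\mathcal J)\Delta_{\mathbf R'}(\mathcal J)$ for all $\mathcal J\in\wp_k[n]$. Fix $\mathcal I\in\wp_k[n]$ with $h(\mathcal I)\ne0$, and suppose there exists an observable set $\chi(\mathcal I\mid^{ij}_{\alpha\beta})$ whose polynomial $F^{ij}_{\alpha\beta}$ has two distinct roots. If $Y_{\mathbf R}(\mathcal I)^{ij}_{\alpha\beta}=Y_{\mathbf R'}(\mathcal I)^{ij}_{\alpha\beta}$, then $Y_{\mathbf R}(\mathcal I)^{lm}_{\gamma\delta}=Y_{\mathbf R'}(\mathcal I)^{lm}_{\gamma\delta}$ for all distinct $l,m\in\mathcal I$ and distinct $\gamma,\delta\in\mathcal I^{\mathtt C}$ such that $\chi(\mathcal I\mid^{lm}_{\gamma\delta})$ is observable. That is, given the family $\{h(\mathcal J)\}$, the choice of one root of $F^{ij}_{\alpha\beta}$ as the value of $Y^{ij}_{\alpha\beta}$ determines all Y-terms with basis $\mathcal I$ associated with observable sets.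
   Context: $[n]=\{1,\dots,n\}$, $\wp_k[n]$ the $k$-subsets. For $\mathcal I\in\wp_k[n]$: $\mathcal I^{\mathtt C}=[n]\setminus\mathcal I$; $\mathcal I^i_\alpha=(\mathcal I\setminus\{i\})\cup\{\alpha\}$; $\mathcal I^{ij}_{\alpha\beta}=(\mathcal I\setminus\{i,j\})\cup\{\alpha,\beta\}$. Maximal minors: columns for $k\times n$, rows for $n\times k$ matrices. For an $n\times k$ matrix $\mathbf R$ with nonzero maximal minors, $Y_{\mathbf R}(\mathcal I)^{ij}_{\alpha\beta}:=-\mathrm{sign}[(i-\alpha)(i-\beta)(j-\alpha)(j-\beta)]\frac{\Delta_{\mathbf R}(\mathcal I^i_\alpha)\Delta_{\mathbf R}(\mathcal I^j_\beta)}{\Delta_{\mathbf R}(\mathcal I^i_\beta)\Delta_{\mathbf R}(\mathcal I^j_\alpha)}$ (distinct $i,j\in\mathcal I$, distinct $\alpha,\beta\in\mathcal I^{\mathtt C}$). $\chi(\mathcal I\mid^{ij}_{\alpha\beta}):=\{h(\mathcal I)h(\mathcal I^{ij}_{\alpha\beta}),h(\mathcal I^i_\alpha)h(\mathcal I^j_\beta),h(\mathcal I^i_\beta)h(\mathcal I^j_\alpha)\}$ (multiset), observable if not all entries are $0$. $A^{ij}_{\alpha\beta}:=h(\mathcal I)h(\mathcal I^{ij}_{\alpha\beta})-h(\mathcal I^i_\alpha)h(\mathcal I^j_\beta)-h(\mathcal I^i_\beta)h(\mathcal I^j_\alpha)$ and $F^{ij}_{\alpha\beta}(X):=h(\mathcal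 I^i_\beta)h(\mathcal I^j_\alpha)X^2-A^{ij}_{\alpha\beta}X+h(\mathcal I^i_\alpha)h(\mathcal I^j_\beta)$; one has $F^{ij}_{\alpha\beta}(Y_{\mathbf R}(\mathcal I)^{ij}_{\alpha\beta})=0$. *)

(* Defs.v *)
From HB Require Import structures.
From mathcomp Require Import all_boot all_order all_algebra.
Set Implicit Arguments. Unset Strict Implicit. Unset Printing Implicit Defensive.
Import Order.TTheory GRing.Theory Num.Theory.
Local Open Scope ring_scope.

(* k-subsets of [n] are sets J : {set 'I_n} with #|J| = k (indices 0..n-1).
   enum J lists J in increasing order, so the minors below use the natural
   ordering of rows/columns. *)
Section Defs.
Variables (K : fieldType) (k n : nat).

Definition minorL (L : 'M[K]_(k, n)) (J : {set 'I_n}) : K :=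
  \det (\matrix_(a < k, b < k) nth 0 [seq L a c | c <- enum J] b).

Definition minorR (R : 'M[K]_(n, k)) (J : {set 'I_n}) : K :=
  \det (\matrix_(a < k, b < k) nth 0 [seq R r b | r <- enum J] a).

Definition swap1 (I : {set 'I_n}) (i al : 'I_n) : {set 'I_n} := al |: (I :\ i).

Definition swap2 (I : {set 'I_n}) (i j al be : 'I_n) : {set 'I_n} :=
  al |: (be |: ((I :\ i) :\ j)).

Definition hprod (L : 'M[K]_(k, n)) (R : 'M[K]_(n, k)) (J : {set 'I_n}) : K :=
  minorL L J * minorR R J.

Definition Yterm (R : 'M[K]_(n, k)) (I : {set 'I_n}) (i j al be : 'I_n) : K :=
  - ((sgz (((i : nat)%:Z - (al : nat)%:Z) * ((i : nat)%:Z - (be : nat)%:Z)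
          * ((j : nat)%:Z - (al : nat)%:Z) * ((j : nat)%:Z - (be : nat)%:Z)))%:~R)
  * (minorR R (swap1 I i al) * minorR R (swap1 I j be))
  / (minorR R (swap1 I i be) * minorR R (swap1 I j al)).

(* chi(I |^{ij}_{alpha beta}) as a list (multiset) of three values *)
Definition chi (h : {set 'I_n} -> K) (I : {set 'I_n}) (i j al be : 'I_n) : seq K :=
  [:: h I * h (swap2 I i j al be);
      h (swap1 I i al) * h (swap1 I j be);
      h (swap1 I i be) * h (swap1 I j al)].

Definition observable (h : {set 'I_n} -> K) (I : {set 'I_n}) (i j al be : 'I_n) : bool :=
  has (fun x => x != 0) (chi h I i j al be).

Definition Aterm (h : {set 'I_n} -> K) (I : {set 'I_n}) (i j al be : 'I_n) : K :=
  h I * h (swap2 I i j al be) - h (swap1 I i al) * h (swap1 I j be)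
  - h (swap1 I i be) * h (swap1 I j al).

Definition Fpoly (h : {set 'I_n} -> K) (I : {set 'I_n}) (i j al be : 'I_n) : {poly K} :=
  (h (swap1 I i be) * h (swap1 I j al))%:P * 'X^2
  - (Aterm h I i j al be)%:P * 'X
  + (h (swap1 I i al) * h (swap1 I j be))%:P.

End Defs.

(* Main.v *)
Require Import Defs.
From HB Require Import structures.
From mathcomp Require Import all_boot all_order all_algebra.
From mathcomp Require Import ring.
From Stdlib Require Import Classical_Prop.
Import Order.TTheory GRing.Theory Num.Theory.
Local Open Scope ring_scope.

Module Helpers.
Set Implicit Arguments. Unset Strict Implicit. Unset Printing Implicit Defensive.

Section LA.
Variables (K : fieldType) (k n : nat).

Definition upd (A : 'M[K]_k) (p : 'I_k) (u : 'rV[K]_k) : 'M[K]_k :=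
  \matrix_(i, j) if i == p then u 0 j else A i j.

Lemma det_upd_lin2 A p (u v : 'rV[K]_k) (b c : K) :
  \det (upd A p (b *: u + c *: v)) = b * \det (upd A p u) + c * \det (upd A p v).
Proof.
apply: (@determinant_multilinear _ _ _ _ _ p).
- by apply/rowP => j; rewrite !mxE eqxx.
- by apply/matrixP => i j; rewrite !mxE eq_sym (negbTE (neq_lift p i)).
- by apply/matrixP => i j; rewrite !mxE eq_sym (negbTE (neq_lift p i)).
Qed.

Lemma det_upd0 A p : \det (upd A p 0) = 0.
Proof.
have := det_upd_lin2 A p 0 0 0 0.
by rewrite !scale0r addr0 !mul0r addr0.
Qed.

Lemma det_upd_lin A p (c : 'rV[K]_k) (B : 'M[K]_k) :
  \det (upd A p (c *m B)) = \sum_i c 0 i * \det (upd A p (row i B)).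
Proof.
rewrite mulmx_sum_row.
elim/big_rec2: _ => [|i y1 y2 _ <-]; first exact: det_upd0.
have := det_upd_lin2 A p (row i B) y2 (c 0 i) 1.
by rewrite scale1r mul1r.
Qed.

Lemma upd_id A p : upd A p (row p A) = A.
Proof. by apply/matrixP => i j; rewrite !mxE; case: eqP => // ->. Qed.

Lemma det_upd_row A p i : i != p -> \det (upd A p (row i A)) = 0.
Proof.
move=> ip; apply: (determinant_alternate ip) => j.
by rewrite !mxE eqxx (negbTE ip).
Qed.

Lemma det_upd1 M p (c : 'rV[K]_k) : \det (upd M p (c *m M)) = c 0 p * \det M.
Proof.
rewrite det_upd_lin (bigD1 p) //= upd_id big1 ?addr0 // => i ip.
by rewrite det_upd_row ?mulr0.
Qed.

Lemma upd_comm A p q u v : p != q -> upd (upd A p u) q v = upd (upd A q v) p u.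
Proof.
move=> pq; apply/matrixP => i j; rewrite !mxE.
by case: (eqVneq i q) => [->|iq] //; rewrite eq_sym (negbTE pq).
Qed.

Lemma upd_xrow M p q : p != q ->
  upd (upd M q (row p M)) p (row q M) = xrow p q M.
Proof.
move=> pq; apply/matrixP => i j; rewrite !mxE.
case: perm.tpermP => [->|->|/eqP ip /eqP iq]; first by rewrite eqxx.
  by rewrite eq_sym (negbTE pq) eqxx.
by rewrite (negbTE ip) (negbTE iq).
Qed.

Lemma det_xrow (M : 'M[K]_k) p q : p != q -> \det (xrow p q M) = - \det M.
Proof.
by move=> pq; rewrite xrowE det_mulmx det_perm perm.odd_tperm pq expr1 mulN1r.
Qed.

Lemma det_upd2 M p q (c d : 'rV[K]_k) : p != q ->
  \det (upd (upd M p (c *m M)) q (d *m M)) = (c 0 p * d 0 q - c 0 q * d 0 p) * \det M.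
Proof.
move=> pq.
rewrite det_upd_lin.
rewrite (eq_bigr (fun i => d 0 i * (if i == q then c 0 p * \det M
          else if i == p then - (c 0 q * \det M) else 0))); last first.
  move=> i _; congr (_ * _).
  case: (eqVneq i q) => [->|iq].
    have -> : upd (upd M p (c *m M)) q (row q M) = upd M p (c *m M).
      apply/matrixP => i' j; rewrite !mxE.
      by case: (eqVneq i' q) => [->|//]; rewrite eq_sym (negbTE pq).
    exact: det_upd1.
  case: (eqVneq i p) => [->|ip].
    rewrite upd_comm // det_upd_lin (bigD1 q) //= (bigD1 p) //= [X in _ + (_ + X)]big1 ?addr0.
      rewrite upd_xrow // det_xrow // .
      have -> : \det (upd (upd M q (row p M)) p (row p M)) = 0.
        apply: (determinant_alternate pq) => j.
        by rewrite !mxE eqxx eq_sym (negbTE pq) eqxx.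
      by rewrite mulr0 addr0 mulrN.
    move=> i' /andP[i'q i'p].
    rewrite (_ : \det _ = 0) ?mulr0 //.
    apply: (determinant_alternate i'p) => j.
    by rewrite !mxE eqxx (negbTE i'p) (negbTE i'q).
  apply: (determinant_alternate iq) => j.
  by rewrite !mxE eqxx (negbTE iq) (negbTE ip).
rewrite (bigD1 q) //= (bigD1 p) //= [X in _ + (_ + X)]big1 ?addr0.
  rewrite eqxx (negbTE pq) eqxx; ring.
by move=> i /andP[ip iq]; rewrite (negbTE ip) (negbTE iq) mulr0.
Qed.




Definition rmf (R : 'M[K]_(n, k)) (f : 'I_k -> 'I_n) : 'M[K]_k :=
  \matrix_(i, j) R (f i) j.

Lemma minorR_rmf (x0 : 'I_n) R (J : {set 'I_n}) : #|J| = k ->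
  minorR R J = \det (rmf R (fun i => nth x0 (enum J) i)).
Proof.
move=> cJ; rewrite /minorR; congr (\det _); apply/matrixP => i j.
by rewrite !mxE (nth_map x0) // -cardE cJ.
Qed.

Lemma sign_lemma (f g : 'I_k -> 'I_n) : injective g ->
  (forall i, exists j, g i = f j) ->
  exists e : K, (e = 1 \/ e = -1) /\ forall R, \det (rmf R g) = e * \det (rmf R f).
Proof.
move=> ginj hex.
pose h i := odflt i [pick j | f j == g i].
have hf i : f (h i) = g i.
  rewrite /h; case: pickP => [j /eqP //|none].
  by have [j hj] := hex i; have := none j; rewrite hj eqxx.
have hinj : injective h by move=> i1 i2 e; apply: ginj; rewrite -!hf e.
pose s := perm.perm hinj.
exists ((-1) ^+ perm.odd_perm s); split.
  by case: (perm.odd_perm s); [right; rewrite expr1 | left; rewrite expr0].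
move=> R.
have -> : rmf R g = row_perm s (rmf R f).
  by apply/matrixP => i j; rewrite !mxE perm.permE hf.
by rewrite row_permE det_mulmx det_perm.
Qed.

Lemma nth_enum_in (x0 : 'I_n) (J : {set 'I_n}) (i : 'I_k) : #|J| = k ->
  nth x0 (enum J) i \in J.
Proof. by move=> cJ; rewrite -mem_enum mem_nth // -cardE cJ. Qed.

Lemma nth_enum_inj (x0 : 'I_n) (J : {set 'I_n}) : #|J| = k ->
  injective (fun i : 'I_k => nth x0 (enum J) i).
Proof.
move=> cJ i1 i2 /eqP; rewrite nth_uniq ?enum_uniq // -?cardE ?cJ //.
by move/eqP/val_inj.
Qed.

Lemma nth_enum_surj (x0 : 'I_n) (J : {set 'I_n}) y : #|J| = k -> y \in J ->
  exists j : 'I_k, nth x0 (enum J) j = y.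
Proof.
move=> cJ yJ.
have lt : (index y (enum J) < k)%N by rewrite -cJ cardE index_mem mem_enum.
by exists (Ordinal lt); rewrite /= nth_index // mem_enum.
Qed.


Lemma card_swap1 (I : {set 'I_n}) r a : #|I| = k -> r \in I -> a \notin I ->
  #|swap1 I r a| = k.
Proof.
move=> cI rI aI; rewrite /swap1 cardsU1 in_setD1 (negbTE aI) andbF.
by have := cardsD1 r I; rewrite rI cI => ->.
Qed.

Lemma card_swap2 (I : {set 'I_n}) r s a b : #|I| = k -> r \in I -> s \in I ->
  r != s -> a \notin I -> b \notin I -> a != b -> #|swap2 I r s a b| = k.
Proof.
move=> cI rI sI rs aI bI ab.
rewrite /swap2 cardsU1 in_setU1 (negbTE ab) /= !in_setD1 (negbTE aI) !andbF /=.
rewrite cardsU1 !in_setD1 (negbTE bI) !andbF /=.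
have := cardsD1 r I; have := cardsD1 s (I :\ r).
by rewrite in_setD1 eq_sym rs sI rI cI /= => -> ->.
Qed.

Section Pl.
Variables (I : {set 'I_n}) (x0 : 'I_n).
Hypothesis cI : #|I| = k.
Let f0 := fun i : 'I_k => nth x0 (enum I) i.

Lemma f0_in i : f0 i \in I.
Proof. exact: nth_enum_in. Qed.

Lemma swap1_sign p a : a \notin I ->
  exists e : K, (e = 1 \/ e = -1) /\ forall R,
    minorR R (swap1 I (f0 p) a) = e * \det (upd (rmf R f0) p (row a R)).
Proof.
move=> aI.
have cJ := card_swap1 cI (f0_in p) aI.
pose g i := if i == p then a else f0 i.
have hex : forall i : 'I_k, exists j, nth x0 (enum (swap1 I (f0 p) a)) i = g j.
  move=> i.
  have := @nth_enum_in x0 _ i cJ; rewrite /swap1 in_setU1 in_setD1.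
  set y := nth _ _ _; case: (eqVneq y a) => [->|ya] /=; first by exists p; rewrite /g eqxx.
  case/andP => yp yI; have [j hj] := @nth_enum_surj x0 _ _ cI yI.
  exists j; rewrite /g; case: (eqVneq j p) => [jp|//].
  by move: yp; rewrite -hj jp /f0 eqxx.
have [e [he HR]] := @sign_lemma g _ (@nth_enum_inj x0 _ cJ) hex.
exists e; split => // R; rewrite (minorR_rmf x0 R cJ) HR; congr (_ * \det _).
by apply/matrixP => i j; rewrite !mxE /g; case: eqP.
Qed.

Lemma swap2_sign p q a b : p != q -> a \notin I -> b \notin I -> a != b ->
  exists e : K, (e = 1 \/ e = -1) /\ forall R,
    minorR R (swap2 I (f0 p) (f0 q) a b) =
      e * \det (upd (upd (rmf R f0) p (row a R)) q (row b R)).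
Proof.
move=> pq aI bI ab.
have f0inj := @nth_enum_inj x0 _ cI.
have rs : f0 p != f0 q by apply: contra pq => /eqP /f0inj ->.
have cJ := card_swap2 cI (f0_in p) (f0_in q) rs aI bI ab.
pose g i := if i == q then b else if i == p then a else f0 i.
have hex : forall i : 'I_k, exists j, nth x0 (enum (swap2 I (f0 p) (f0 q) a b)) i = g j.
  move=> i.
  have := @nth_enum_in x0 _ i cJ; rewrite /swap2 !in_setU1 !in_setD1.
  set y := nth _ _ _; case: (eqVneq y a) => [->|ya] /=.
    by exists p; rewrite /g (negbTE pq) eqxx.
  case: (eqVneq y b) => [->|yb] /=; first by exists q; rewrite /g eqxx.
  case/and3P => yq yp yI; have [j hj] := @nth_enum_surj x0 _ _ cI yI.
  exists j; rewrite /g; case: (eqVneq j q) => [jq|_].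
    by move: yq; rewrite -hj jq eqxx.
  case: (eqVneq j p) => [jp|//].
  by move: yp; rewrite -hj jp eqxx.
have [e [he HR]] := @sign_lemma g _ (@nth_enum_inj x0 _ cJ) hex.
exists e; split => // R; rewrite (minorR_rmf x0 R cJ) HR; congr (_ * \det _).
by apply/matrixP => i j; rewrite !mxE /g; case: eqP => //; case: eqP.
Qed.


Lemma sgnM (e f : K) : (e = 1 \/ e = -1) -> (f = 1 \/ f = -1) -> (e * f = 1 \/ e * f = -1).
Proof. by case=> ->; case=> ->; rewrite ?mulN1r ?mul1r ?opprK; auto. Qed.

Lemma sgnN (e : K) : (e = 1 \/ e = -1) -> (- e = 1 \/ - e = -1).
Proof. by case=> ->; rewrite ?opprK; auto. Qed.

Lemma plucker p q a b : p != q -> a \notin I -> b \notin I -> a != b ->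
  exists e1 e2 : K, [/\ e1 = 1 \/ e1 = -1, e2 = 1 \/ e2 = -1 &
   forall R : 'M[K]_(n, k), minorR R I != 0 ->
   minorR R I * minorR R (swap2 I (f0 p) (f0 q) a b) =
     e1 * (minorR R (swap1 I (f0 p) a) * minorR R (swap1 I (f0 q) b)) +
     e2 * (minorR R (swap1 I (f0 p) b) * minorR R (swap1 I (f0 q) a))].
Proof.
move=> pq aI bI ab.
have [e1 [h1 H1]] := swap1_sign p aI.
have [e2 [h2 H2]] := swap1_sign q bI.
have [e3 [h3 H3]] := swap1_sign p bI.
have [e4 [h4 H4]] := swap1_sign q aI.
have [e5 [h5 H5]] := swap2_sign pq aI bI ab.
exists (e5 * e1 * e2), (- (e5 * e3 * e4)); split.
- by apply: sgnM => //; apply: sgnM.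
- by apply: sgnN; apply: sgnM => //; apply: sgnM.
move=> R nz.
have eI : minorR R I = \det (rmf R f0) by exact: (minorR_rmf x0 R cI).
have uM : rmf R f0 \in unitmx by rewrite unitmxE unitfE -eI.
rewrite H1 H2 H3 H4 H5 eI.
rewrite -[row a R](mulmxKV uM) -[row b R](mulmxKV uM).
rewrite det_upd2 // !det_upd1.
set c := row a R *m _; set d := row b R *m _; set D := \det _.
by case: h1 => ->; case: h2 => ->; case: h3 => ->; case: h4 => ->;
   case: h5 => ->; ring.
Qed.

End Pl.
End LA.

Lemma plucker_set (K : fieldType) (k n : nat) (I : {set 'I_n}) r s a b :
  #|I| = k -> r \in I -> s \in I -> r != s -> a \notin I -> b \notin I -> a != b ->
  exists e1 e2 : K, [/\ e1 = 1 \/ e1 = -1, e2 = 1 \/ e2 = -1 &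
   forall R : 'M[K]_(n, k), minorR R I != 0 ->
   minorR R I * minorR R (swap2 I r s a b) =
     e1 * (minorR R (swap1 I r a) * minorR R (swap1 I s b)) +
     e2 * (minorR R (swap1 I r b) * minorR R (swap1 I s a))].
Proof.
move=> cI rI sI rs aI bI ab.
have [p hp] := @nth_enum_surj k n r _ _ cI rI.
have [q hq] := @nth_enum_surj k n r _ _ cI sI.
have pq : p != q by apply: contraNneq rs => pq; rewrite -hp -hq pq.
have := @plucker K k n I r cI p q a b pq aI bI ab.
by rewrite /= hp hq.
Qed.

Lemma minorL_tr (K : fieldType) (k n : nat) (L : 'M[K]_(k, n)) J :
  minorL L J = minorR L^T J.
Proof.
rewrite /minorL /minorR -det_tr; congr (\det _); apply/matrixP => a b.
by rewrite !mxE; congr nth; apply: eq_map => c; rewrite mxE.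
Qed.

Lemma union2 (T : Type) (D : T -> Prop) (R1 R2 : T -> T -> Prop) :
  (forall u v, D u -> D v -> R1 u v -> R1 v u) ->
  (forall u v, D u -> D v -> R2 u v -> R2 v u) ->
  (forall u v w, D u -> D v -> D w -> R1 u v -> R1 v w -> R1 u w) ->
  (forall u v w, D u -> D v -> D w -> R2 u v -> R2 v w -> R2 u w) ->
  (forall u v, D u -> D v -> R1 u v \/ R2 u v) ->
  (forall u v, D u -> D v -> R1 u v) \/ (forall u v, D u -> D v -> R2 u v).
Proof.
move=> s1 s2 t1 t2 tot.
case: (classic (forall u v, D u -> D v -> R1 u v)) => [|n1]; first by left.
right => w z Dw Dz.
apply: NNPP => nz.
apply: n1 => u v Du Dv.
apply: NNPP => nuv.
have r2uv : R2 u v by case: (tot u v Du Dv).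
have r1wz : R1 w z by case: (tot w z Dw Dz).
case: (tot u w Du Dw) => [r1uw|r2uw].
- have r1uz := t1 _ _ _ Du Dw Dz r1uw r1wz.
  have r2vw : R2 v w.
    case: (tot v w Dv Dw) => // r1vw.
    by case: nuv; apply: t1 Du Dw Dv r1uw (s1 _ _ Dv Dw r1vw).
  have r2vz : R2 v z.
    case: (tot v z Dv Dz) => // r1vz.
    by case: nuv; apply: t1 Du Dz Dv r1uz (s1 _ _ Dv Dz r1vz).
  by apply: nz; apply: t2 Dw Dv Dz (s2 _ _ Dv Dw r2vw) r2vz.
- have r2wv := t2 _ _ _ Dw Du Dv (s2 _ _ Du Dw r2uw) r2uv.
  have r1uz : R1 u z.
    case: (tot u z Du Dz) => // r2uz.
    by case: nz; apply: t2 Dw Du Dz (s2 _ _ Du Dw r2uw) r2uz.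
  have r2vz : R2 v z.
    case: (tot v z Dv Dz) => // r1vz.
    by case: nuv; apply: t1 Du Dz Dv r1uz (s1 _ _ Dv Dz r1vz).
  by apply: nz; apply: t2 Dw Dv Dz r2wv r2vz.
Qed.

Section AL.
Variables (K : fieldType) (n : nat).

Definition PhiR (f : 'I_n -> 'I_n -> K) r s a b := f r a * f s b = f r b * f s a.

Lemma PhiR_rr f r a b : PhiR f r r a b.
Proof. by rewrite /PhiR mulrC. Qed.

Lemma PhiR_cc f r s a : PhiR f r s a a.
Proof. by []. Qed.

Lemma PhiR_symr f r s a b : PhiR f r s a b -> PhiR f s r a b.
Proof. by rewrite /PhiR => e; rewrite mulrC -e mulrC. Qed.

Lemma PhiR_symc f r s a b : PhiR f r s a b -> PhiR f r s b a.
Proof. by rewrite /PhiR => e; rewrite e. Qed.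

Lemma PhiR_transr f r s t a b : f s a != 0 -> f s b != 0 ->
  PhiR f r s a b -> PhiR f s t a b -> PhiR f r t a b.
Proof.
rewrite /PhiR => h1 h2 e1 e2; apply: (mulIf (mulf_neq0 h1 h2)).
transitivity ((f r a * f s b) * (f s a * f t b)); first ring.
rewrite e1 e2; ring.
Qed.

Lemma PhiR_transc f r s a b c : f r b != 0 -> f s b != 0 ->
  PhiR f r s a b -> PhiR f r s b c -> PhiR f r s a c.
Proof.
rewrite /PhiR => h1 h2 e1 e2; apply: (mulIf (mulf_neq0 h1 h2)).
transitivity ((f r a * f s b) * (f r b * f s c)); first ring.
rewrite e1 e2; ring.
Qed.

Lemma PhiR_Z f l m r g d a : f r a != 0 ->
  PhiR f l r g a -> PhiR f m r g a -> PhiR f l r d a -> PhiR f m r d a ->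
  PhiR f l m g d.
Proof.
rewrite /PhiR => h e1 e2 e3 e4; apply: (mulIf (mulf_neq0 h h)).
transitivity ((f l g * f r a) * (f m d * f r a)); first ring.
rewrite e1 e4; symmetry.
transitivity ((f l d * f r a) * (f m g * f r a)); first ring.
rewrite e3 e2; ring.
Qed.

Variables (I : {set 'I_n}) (phi mu p : 'I_n -> 'I_n -> K).
Hypothesis Hphi : forall r a, r \in I -> a \notin I -> phi r a != 0.
Hypothesis Hmu : forall r a, r \in I -> a \notin I -> p r a != 0 -> mu r a != 0.
Hypothesis HD : forall r s a b, r \in I -> s \in I -> a \notin I -> b \notin I ->
  (p r a * p s b != 0) \/ (p r b * p s a != 0) ->
  PhiR phi r s a b \/ [/\ p r a * p s b != 0, p r b * p s a != 0 & PhiR mu r s a b].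

Lemma HD1 r s a b : r \in I -> s \in I -> a \notin I -> b \notin I ->
  p r a * p s b != 0 -> p r b * p s a = 0 -> PhiR phi r s a b.
Proof.
move=> rI sI aI bI h1 h2.
by case: (HD rI sI aI bI (or_introl h1)) => // -[_]; rewrite h2 eqxx.
Qed.

Lemma HD2 r s a b : r \in I -> s \in I -> a \notin I -> b \notin I ->
  p r a * p s b = 0 -> p r b * p s a != 0 -> PhiR phi r s a b.
Proof.
move=> rI sI aI bI h1 h2.
by case: (HD rI sI aI bI (or_intror h2)) => // -[]; rewrite h1 eqxx.
Qed.

Lemma AL i j al be l m ga de :
  i \in I -> j \in I -> al \notin I -> be \notin I ->
  l \in I -> m \in I -> ga \notin I -> de \notin I ->
  p i be * p j al != 0 -> PhiR phi i j al be ->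
  (p i al * p j be != 0 -> ~ PhiR mu i j al be) ->
  (p l ga * p m de != 0) \/ (p l de * p m ga != 0) ->
  PhiR phi l m ga de.
Proof.
move=> iI jI alI beI lI mI gaI deI hH1 hH2 hH3 hobs.
case: (HD lI mI gaI deI hobs) => [//|[P1nz P2nz _]].
apply: NNPP => nT.
move: P1nz P2nz; rewrite !mulf_eq0 !negb_or => /andP[plg pmd] /andP[pld pmg].
have Z r a : r \in I -> a \notin I -> PhiR phi l r ga a -> PhiR phi m r ga a ->
    PhiR phi l r de a -> PhiR phi m r de a -> False.
  by move=> rI aI e1 e2 e3 e4; apply: nT; apply: (PhiR_Z (Hphi rI aI)) e1 e2 e3 e4.
have colc a : a \notin I -> p l a != 0 -> p m a != 0.
  move=> aI pla; apply/negP => /eqP pma.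
  apply: (Z m a mI aI); try exact: PhiR_rr.
    by apply: HD2 => //; rewrite ?pma ?mulr0 // mulf_neq0.
  by apply: HD2 => //; rewrite ?pma ?mulr0 // mulf_neq0.
have colc' a : a \notin I -> p m a != 0 -> p l a != 0.
  move=> aI pma; apply/negP => /eqP pla.
  apply: (Z m a mI aI); try exact: PhiR_rr.
    by apply: HD1 => //; rewrite ?pla ?mul0r // mulf_neq0.
  by apply: HD1 => //; rewrite ?pla ?mul0r // mulf_neq0.
have rowc r : r \in I -> p r ga != 0 -> p r de != 0.
  move=> rI prg; apply/negP => /eqP prd.
  apply: (Z r de rI deI); try exact: PhiR_cc.
    by apply: HD2 => //; rewrite ?prd ?mulr0 // mulf_neq0.
  by apply: HD2 => //; rewrite ?prd ?mulr0 // mulf_neq0.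
have rowc' r : r \in I -> p r de != 0 -> p r ga != 0.
  move=> rI prd; apply/negP => /eqP prg.
  apply: (Z r de rI deI); try exact: PhiR_cc.
    by apply: HD1 => //; rewrite ?prg ?mulr0 // mulf_neq0.
  by apply: HD1 => //; rewrite ?prg ?mulr0 // mulf_neq0.
pose inA a := [/\ a \notin I, p l a != 0 & p m a != 0].
pose inB r := [/\ r \in I, p r ga != 0 & p r de != 0].
have H4 r a l' g' : r \in I -> a \notin I -> l' \in I -> g' \notin I ->
    p l' g' != 0 -> p r a != 0 -> PhiR phi l' r g' a \/ (p l' a != 0 /\ p r g' != 0).
  move=> rI aI l'I g'I h1 h2.
  case: (HD l'I rI g'I aI (or_introl (mulf_neq0 h1 h2))) => [|[_]]; first by left.
  by rewrite mulf_eq0 negb_or => /andP[? ?] _; right.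
have edge r a : r \in I -> a \notin I -> p r a != 0 -> inB r /\ inA a.
  move=> rI aI pra; split.
    have [prg|/negbNE/eqP prg] := boolP (p r ga != 0).
      by split => //; apply: rowc.
    have [prd|/negbNE/eqP prd] := boolP (p r de != 0).
      by split => //; apply: rowc'.
    exfalso; apply: (Z r a rI aI).
    - by case: (H4 r a l ga) => // -[_]; rewrite prg eqxx.
    - by case: (H4 r a m ga) => // -[_]; rewrite prg eqxx.
    - by case: (H4 r a l de) => // -[_]; rewrite prd eqxx.
    - by case: (H4 r a m de) => // -[_]; rewrite prd eqxx.
  have [pla|/negbNE/eqP pla] := boolP (p l a != 0).
    by split => //; apply: colc.
  have [pma|/negbNE/eqP pma] := boolP (p m a != 0).
    by split => //; apply: colc'.
  exfalso; apply: (Z r a rI aI).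
  - by case: (H4 r a l ga) => // -[]; rewrite pla eqxx.
  - by case: (H4 r a m ga) => // -[]; rewrite pma eqxx.
  - by case: (H4 r a l de) => // -[]; rewrite pla eqxx.
  - by case: (H4 r a m de) => // -[]; rewrite pma eqxx.
have compl r a : inB r -> inA a -> p r a != 0.
  move=> [rI prg prd] [aI pla pma]; apply/negP => /eqP pra.
  apply: (Z r a rI aI); apply: HD2 => //; rewrite ?pra ?mulr0 //; exact: mulf_neq0.
have inB_I r : inB r -> r \in I by case.
have inA_I a : inA a -> a \notin I by case.
have step1 r s : inB r -> inB s ->
   (forall a b, inA a -> inA b -> PhiR phi r s a b) \/
   (forall a b, inA a -> inA b -> PhiR mu r s a b).
  move=> Br Bs; apply: union2.
  - by move=> a b _ _; apply: PhiR_symc.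
  - by move=> a b _ _; apply: PhiR_symc.
  - by move=> a b c _ Ab _; apply: PhiR_transc; apply: Hphi; auto.
  - move=> a b c _ Ab _; apply: PhiR_transc; apply: Hmu; auto; exact: compl.
  - move=> a b Aa Ab.
    case: (HD (inB_I _ Br) (inB_I _ Bs) (inA_I _ Aa) (inA_I _ Ab)).
    + by left; rewrite mulf_neq0 // compl.
    + by left.
    + by case=> _ _; right.
have step2 : (forall r s, inB r -> inB s -> forall a b, inA a -> inA b -> PhiR phi r s a b) \/
             (forall r s, inB r -> inB s -> forall a b, inA a -> inA b -> PhiR mu r s a b).
  apply: union2 => //.
  - by move=> r s _ _ h a b Aa Ab; apply: PhiR_symr; apply: h.
  - by move=> r s _ _ h a b Aa Ab; apply: PhiR_symr; apply: h.
  - move=> r s t _ Bs _ h1 h2 a b Aa Ab.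
    by apply: (PhiR_transr (s := s)); rewrite ?Hphi ?h1 ?h2 //; auto.
  - move=> r s t _ Bs _ h1 h2 a b Aa Ab.
    by apply: (PhiR_transr (s := s)); rewrite ?Hmu ?h1 ?h2 ?compl //; auto.
have Bl : inB l by [].
have Bm : inB m by [].
have Aga : inA ga by [].
have Ade : inA de by [].
case: step2 => [hall|hall]; first by apply: nT; apply: hall.
move: hH1; rewrite mulf_eq0 negb_or => /andP[pib pja].
have [Bi Abe] := edge i be iI beI pib.
have [Bj Aal] := edge j al jI alI pja.
by apply: (hH3 _ (hall i j Bi Bj al be Aal Abe)); rewrite mulf_neq0 ?compl.
Qed.

End AL.

Lemma combine (K : fieldType) (e1 e2 xra xsb xrb xsa yra ysb yrb ysa : K) :
  (e1 = 1 \/ e1 = -1) -> (e2 = 1 \/ e2 = -1) ->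
  xra != 0 -> xsb != 0 -> xrb != 0 -> xsa != 0 ->
  (e1 * (yra * ysb) + e2 * (yrb * ysa)) * (e1 * (xra * xsb) + e2 * (xrb * xsa)) =
  (yra * xra) * (ysb * xsb) + (yrb * xrb) * (ysa * xsa) +
  e1 * e2 * ((yra * xra) * (ysb * xsb) / (xra * xsb / (xrb * xsa)) +
             (yrb * xrb) * (ysa * xsa) * (xra * xsb / (xrb * xsa))).
Proof.
move=> h1 h2 n1 n2 n3 n4.
case: h1 => ->; case: h2 => ->; by field; rewrite n1 n2 n3 n4.
Qed.

Lemma sgz_nz (K : fieldType) (z : int) : z != 0 -> (sgz z)%:~R != 0 :> K.
Proof.
move=> nz; rewrite /sgz (negbTE nz); case: ifP => _.
  by rewrite mulrN1z oppr_eq0 oner_eq0.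
by rewrite mulr1z oner_eq0.
Qed.

Definition cr (K : fieldType) n (f : 'I_n -> 'I_n -> K) r s a b :=
  f r a * f s b / (f r b * f s a).

Lemma Yterm_cr (K : fieldType) k n (R : 'M[K]_(n, k)) I i j al be :
  Yterm R I i j al be =
  - ((sgz (((i : nat)%:Z - (al : nat)%:Z) * ((i : nat)%:Z - (be : nat)%:Z)
          * ((j : nat)%:Z - (al : nat)%:Z) * ((j : nat)%:Z - (be : nat)%:Z)))%:~R)
  * cr (fun r a => minorR R (swap1 I r a)) i j al be.
Proof. by rewrite /Yterm /cr !mulrA. Qed.

Lemma diffz_nz n (I : {set 'I_n}) (i al : 'I_n) : i \in I -> al \notin I ->
  (i : nat)%:Z - (al : nat)%:Z != 0.
Proof.
move=> iI alI; rewrite subr_eq0 eqz_nat; apply/negP => /eqP e.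
by move: alI; rewrite (_ : al = i) ?iI //; apply: val_inj.
Qed.


Lemma conv_phi (K : fieldType) (a1 a2 a3 a4 b1 b2 b3 b4 : K) :
  a1 != 0 -> a2 != 0 -> a3 != 0 -> a4 != 0 ->
  b1 != 0 -> b2 != 0 -> b3 != 0 -> b4 != 0 ->
  (a1 * a2 / (a3 * a4) = b1 * b2 / (b3 * b4)) <->
  (b1 / a1 * (b2 / a2) = b3 / a3 * (b4 / a4)).
Proof.
move=> n1 n2 n3 n4 m1 m2 m3 m4.
have X0 : a1 * a2 / (a3 * a4) != 0 by rewrite !mulf_neq0 ?invr_neq0 ?mulf_neq0.
have Y0 : b3 / a3 * (b4 / a4) != 0 by rewrite !mulf_neq0 ?invr_neq0.
split => e.
  have -> : b1 / a1 * (b2 / a2) = b3 / a3 * (b4 / a4) *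
       ((b1 * b2 / (b3 * b4)) / (a1 * a2 / (a3 * a4))) by field; rewrite ?n1 ?n2 ?n3 ?n4 ?m3 ?m4.
  by rewrite -e divff ?mulr1.
have -> : a1 * a2 / (a3 * a4) = b1 * b2 / (b3 * b4) *
     ((b3 / a3 * (b4 / a4)) / (b1 / a1 * (b2 / a2))) by field; rewrite ?n1 ?n2 ?n3 ?n4 ?m1 ?m2 ?m3 ?m4.
by rewrite -e divff ?mulr1 // e.
Qed.

Lemma conv_mu (K : fieldType) (a1 a2 a3 a4 b1 b2 b3 b4 p1 p2 p3 p4 : K) :
  a1 != 0 -> a2 != 0 -> a3 != 0 -> a4 != 0 ->
  b1 != 0 -> b2 != 0 -> b3 != 0 -> b4 != 0 ->
  p1 != 0 -> p2 != 0 -> p3 != 0 -> p4 != 0 ->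
  (p3 * p4 * (a1 * a2 / (a3 * a4)) * (b1 * b2 / (b3 * b4)) = p1 * p2) <->
  (a1 * b1 / p1 * (a2 * b2 / p2) = a3 * b3 / p3 * (a4 * b4 / p4)).
Proof.
move=> n1 n2 n3 n4 m1 m2 m3 m4 q1 q2 q3 q4.
split => e.
  have -> : a1 * b1 / p1 * (a2 * b2 / p2) = a3 * b3 / p3 * (a4 * b4 / p4) *
     ((p3 * p4 * (a1 * a2 / (a3 * a4)) * (b1 * b2 / (b3 * b4))) / (p1 * p2)).
    by field; rewrite ?n1 ?n2 ?n3 ?n4 ?m1 ?m2 ?m3 ?m4 ?q1 ?q2 ?q3 ?q4.
  by rewrite e divff ?mulr1 // mulf_neq0.
have -> : p3 * p4 * (a1 * a2 / (a3 * a4)) * (b1 * b2 / (b3 * b4)) = p1 * p2 *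
   ((a1 * b1 / p1 * (a2 * b2 / p2)) / (a3 * b3 / p3 * (a4 * b4 / p4))).
  by field; rewrite ?n1 ?n2 ?n3 ?n4 ?m1 ?m2 ?m3 ?m4 ?q1 ?q2 ?q3 ?q4.
by rewrite e divff ?mulr1 // !mulf_neq0 ?invr_neq0.
Qed.

Lemma quad_anal (K : fieldType) (e P1 P2 rho A hh2 u v : K) :
  (e = 1 \/ e = -1) -> rho != 0 ->
  hh2 = P1 + P2 + e * (P1 / rho + P2 * rho) -> A = hh2 - P1 - P2 ->
  [|| hh2 != 0, P1 != 0 | P2 != 0] -> u != v ->
  P2 * u ^+ 2 - A * u + P1 = 0 -> P2 * v ^+ 2 - A * v + P1 = 0 ->
  P2 != 0 /\ P2 * rho ^+ 2 != P1.
Proof.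
move=> he r0 hh2e Ae hob uv hu hv.
have {Ae} Ae : A = e * (P1 / rho + P2 * rho) by rewrite Ae hh2e; ring.
have P2nz : P2 != 0.
  apply/negP => /eqP P20; move: hob hu hv; rewrite P20 in Ae hh2e * => hob hu hv.
  have A0 : A = 0.
    have : A * (u - v) = 0.
      by transitivity ((0 * v ^+ 2 - A * v + P1) - (0 * u ^+ 2 - A * u + P1));
        [ring | rewrite hu hv subrr].
    by move/eqP; rewrite mulf_eq0 subr_eq0 (negbTE uv) orbF => /eqP.
  have P10 : P1 = 0 by move: hu; rewrite A0 !mul0r subr0 add0r.
  by move: hob; rewrite hh2e P10 !mul0r !add0r mulr0 eqxx.
split => //; apply/negP => /eqP P1e.
have sq w : P2 * w ^+ 2 - A * w + P1 = 0 -> w = e * rho.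
  move=> hw; apply/eqP; rewrite -subr_eq0; apply/eqP.
  have : P2 * (w - e * rho) ^+ 2 = 0.
    rewrite -hw Ae -P1e.
    by case: he => ->; field.
  by move/eqP; rewrite mulf_eq0 (negbTE P2nz) /= expf_eq0 /= => /eqP.
by move: uv; rewrite (sq u hu) (sq v hv) eqxx.
Qed.

Lemma obs_anal (K : fieldType) (e P1 P2 rho hh2 : K) :
  hh2 = P1 + P2 + e * (P1 / rho + P2 * rho) ->
  [|| hh2 != 0, P1 != 0 | P2 != 0] -> P1 != 0 \/ P2 != 0.
Proof.
move=> hh2e; have [P10|] := eqVneq P1 0; last by left.
have [P20|] := eqVneq P2 0; last by right.
by rewrite hh2e P10 P20 !mul0r !add0r mulr0 eqxx.
Qed.

End Helpers.
Import Helpers.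

Theorem mainTheorem17 (K : fieldType) (k n : nat)
  (L L' : 'M[K]_(k, n)) (R R' : 'M[K]_(n, k)) :
  (forall J : {set 'I_n}, #|J| = k -> minorR R J != 0) ->
  (forall J : {set 'I_n}, #|J| = k -> minorR R' J != 0) ->
  (forall J : {set 'I_n}, #|J| = k -> hprod L R J = hprod L' R' J) ->
  forall I : {set 'I_n}, #|I| = k -> hprod L R I != 0 ->
  forall i j al be : 'I_n,
    i \in I -> j \in I -> i != j -> al \notin I -> be \notin I -> al != be ->
    observable (hprod L R) I i j al be ->
    (exists x y : K, [/\ x != y, root (Fpoly (hprod L R) I i j al be) x
                       & root (Fpoly (hprod L R) I i j al be) y]) ->
    Yterm R I i j al be = Yterm R' I i j al be ->
  forall l m ga de : 'I_n,
    l \in I -> m \in I -> l != m -> ga \notin I -> de \notin I -> ga != de ->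
    observable (hprod L R) I l m ga de ->
    Yterm R I l m ga de = Yterm R' I l m ga de.
Proof.
move=> hR hR' hh I cI hI i j al be iI jI ij alI beI albe obs [u [v [uv ru rv]]] Yeq
  l m ga de lI mI lm gaI deI gade obs2.
pose h := hprod L R.
pose x r a := minorR R (swap1 I r a).
pose x' r a := minorR R' (swap1 I r a).
pose pp r a := h (swap1 I r a).
have xnz r a : r \in I -> a \notin I -> x r a != 0.
  by move=> rI aI; apply: hR; exact: (card_swap1 cI rI aI).
have x'nz r a : r \in I -> a \notin I -> x' r a != 0.
  by move=> rI aI; apply: hR'; exact: (card_swap1 cI rI aI).
have RI : minorR R I != 0 by apply: hR.
have R'I : minorR R' I != 0 by apply: hR'.
have LI : minorR L^T I != 0.
  by move: hI; rewrite /hprod minorL_tr mulf_eq0 negb_or => /andP[].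
have L'I : minorR L'^T I != 0.
  by move: hI; rewrite hh // /hprod minorL_tr mulf_eq0 negb_or => /andP[].
have ppE r a : r \in I -> a \notin I -> hprod L' R' (swap1 I r a) = pp r a.
  by move=> rI aI; rewrite /pp /h hh // (card_swap1 cI rI aI).
have G r s a b : r \in I -> s \in I -> r != s -> a \notin I -> b \notin I -> a != b ->
  exists e : K, [/\ e = 1 \/ e = -1,
    h I * h (swap2 I r s a b) = pp r a * pp s b + pp r b * pp s a +
      e * (pp r a * pp s b / cr x r s a b + pp r b * pp s a * cr x r s a b) &
    pp r a * pp s b / cr x r s a b + pp r b * pp s a * cr x r s a b =
    pp r a * pp s b / cr x' r s a b + pp r b * pp s a * cr x' r s a b].
  move=> rI sI rs aI bI ab.
  have [e1 [e2 [h1 h2 HP]]] := @plucker_set K k n I r s a b cI rI sI rs aI bI ab.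
  have cJ := card_swap2 cI rI sI rs aI bI ab.
  have F1 : h I * h (swap2 I r s a b) = pp r a * pp s b + pp r b * pp s a +
      e1 * e2 * (pp r a * pp s b / cr x r s a b + pp r b * pp s a * cr x r s a b).
    rewrite /pp /h /hprod /cr /x !minorL_tr.
    transitivity ((minorR L^T I * minorR L^T (swap2 I r s a b)) *
                  (minorR R I * minorR R (swap2 I r s a b))); first ring.
    rewrite !HP //; apply: combine => //; exact: xnz.
  have F2 : hprod L' R' I * hprod L' R' (swap2 I r s a b) =
      pp r a * pp s b + pp r b * pp s a +
      e1 * e2 * (pp r a * pp s b / cr x' r s a b + pp r b * pp s a * cr x' r s a b).
    rewrite -!ppE // /hprod /cr /x' !minorL_tr.
    transitivity ((minorR L'^T I * minorR L'^T (swap2 I r s a b)) *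
                  (minorR R' I * minorR R' (swap2 I r s a b))); first ring.
    rewrite !HP //; apply: combine => //; exact: x'nz.
  exists (e1 * e2); split => //.
    by case: h1 => ->; case: h2 => ->; rewrite ?mulN1r ?mul1r ?opprK; auto.
  have e12 : e1 * e2 != 0.
    by case: h1 => ->; case: h2 => ->; rewrite ?mulN1r ?mul1r ?opprK ?oppr_eq0 oner_eq0.
  apply: (mulfI e12); apply: (addrI (pp r a * pp s b + pp r b * pp s a)).
  by rewrite -F1 -F2 /h -!hh.

pose phi r a := x' r a / x r a.
pose mu r a := x r a * x' r a / pp r a.
have Hphi r a : r \in I -> a \notin I -> phi r a != 0.
  by move=> rI aI; rewrite mulf_neq0 ?invr_neq0 ?xnz ?x'nz.
have Hmu r a : r \in I -> a \notin I -> pp r a != 0 -> mu r a != 0.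
  by move=> rI aI pra; rewrite !mulf_neq0 ?invr_neq0 ?xnz ?x'nz.
have crnz (f : 'I_n -> 'I_n -> K) r s a b :
    (forall r a, r \in I -> a \notin I -> f r a != 0) ->
    r \in I -> s \in I -> a \notin I -> b \notin I -> cr f r s a b != 0.
  by move=> fnz rI sI aI bI; rewrite /cr !mulf_neq0 ?invr_neq0 ?mulf_neq0 ?fnz.
have cphi r s a b : r \in I -> s \in I -> a \notin I -> b \notin I ->
    (cr x r s a b = cr x' r s a b) <-> PhiR phi r s a b.
  move=> rI sI aI bI; rewrite /PhiR /phi /cr.
  by apply: conv_phi; rewrite ?xnz ?x'nz.
have cmu r s a b : r \in I -> s \in I -> a \notin I -> b \notin I ->
    pp r a != 0 -> pp s b != 0 -> pp r b != 0 -> pp s a != 0 ->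
    (pp r b * pp s a * cr x r s a b * cr x' r s a b = pp r a * pp s b) <->
    PhiR mu r s a b.
  move=> rI sI aI bI q1 q2 q3 q4; rewrite /PhiR /mu /cr.
  by apply: conv_mu; rewrite ?xnz ?x'nz.
have HD r s a b : r \in I -> s \in I -> a \notin I -> b \notin I ->
  (pp r a * pp s b != 0) \/ (pp r b * pp s a != 0) ->
  PhiR phi r s a b \/
  [/\ pp r a * pp s b != 0, pp r b * pp s a != 0 & PhiR mu r s a b].
  move=> rI sI aI bI hob.
  case: (eqVneq r s) => [<-|rs]; first by left; exact: PhiR_rr.
  case: (eqVneq a b) => [<-|ab]; first by left; exact: PhiR_cc.
  have [e [he _ Geq]] := G r s a b rI sI rs aI bI ab.
  have r0 : cr x r s a b != 0 by apply: crnz.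
  have r0' : cr x' r s a b != 0 by apply: crnz.
  move: Geq hob (cmu r s a b rI sI aI bI) (cphi r s a b rI sI aI bI).
  set rho := cr x r s a b; set rho' := cr x' r s a b.
  set P1 := pp r a * pp s b; set P2 := pp r b * pp s a.
  move=> Geq hob cm cp.
  have r0s : rho != 0 := r0.
  have r0s' : rho' != 0 := r0'.
  have key : (rho - rho') * (P2 * rho * rho' - P1) = 0.
    transitivity (((P1 / rho + P2 * rho) - (P1 / rho' + P2 * rho')) * rho * rho').
      by field; rewrite r0s r0s'.
    by rewrite Geq subrr !mul0r.
  move/eqP: key; rewrite mulf_eq0 !subr_eq0 => /orP[/eqP e1|/eqP e2].
    by left; apply/cp.
  have P1nz : P1 != 0.
    apply/negP => /eqP P10.
    have P2nz : P2 != 0 by case: hob => //; rewrite P10 eqxx.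
    by move: (mulf_neq0 (mulf_neq0 P2nz r0s) r0s'); rewrite e2 P10 eqxx.
  have P2nz : P2 != 0.
    by apply/negP => /eqP P20; move: P1nz; rewrite -e2 P20 !mul0r eqxx.
  right; split => //; apply/cm => //.
  - by move: P1nz; rewrite mulf_eq0 negb_or => /andP[].
  - by move: P1nz; rewrite mulf_eq0 negb_or => /andP[].
  - by move: P2nz; rewrite mulf_eq0 negb_or => /andP[].
  - by move: P2nz; rewrite mulf_eq0 negb_or => /andP[].
have rhoH : cr x i j al be = cr x' i j al be.
  move: Yeq; rewrite !Yterm_cr => /mulfI; apply.
  rewrite oppr_eq0; apply: sgz_nz.
  by rewrite !mulf_neq0 // (diffz_nz iI, diffz_nz jI).
have [eH [heH FH _]] := G i j al be iI jI ij alI beI albe.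
have [P2H DH] : pp i be * pp j al != 0 /\
    pp i be * pp j al * (cr x i j al be) ^+ 2 != pp i al * pp j be.
  apply: (quad_anal (A := Aterm (hprod L R) I i j al be) heH
           (crnz _ _ _ _ _ xnz iI jI alI beI) FH _ _ uv).
  - by rewrite /Aterm.
  - by move: obs; rewrite /observable /chi /= orbF.
  - by move: ru; rewrite /root /Fpoly !hornerE => /eqP.
  - by move: rv; rewrite /root /Fpoly !hornerE => /eqP.
have [eT [heT FT _]] := G l m ga de lI mI lm gaI deI gade.
have obsT : (pp l ga * pp m de != 0) \/ (pp l de * pp m ga != 0).
  apply: (obs_anal FT).
  by move: obs2; rewrite /observable /chi /= orbF.
have hH3 : pp i al * pp j be != 0 -> ~ PhiR mu i j al be.
  move=> P1nz.
  have q1 : pp i al != 0 by apply: contraNneq P1nz => ->; rewrite mul0r.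
  have q2 : pp j be != 0 by apply: contraNneq P1nz => ->; rewrite mulr0.
  have q3 : pp i be != 0 by apply: contraNneq P2H => ->; rewrite mul0r.
  have q4 : pp j al != 0 by apply: contraNneq P2H => ->; rewrite mulr0.
  move/(cmu i j al be iI jI alI beI q1 q2 q3 q4).
  by rewrite -rhoH -mulrA -expr2 => e; move: DH; rewrite e eqxx.
have PT := AL Hphi Hmu HD iI jI alI beI lI mI gaI deI P2H
  (proj1 (cphi _ _ _ _ iI jI alI beI) rhoH) hH3 obsT.
rewrite !Yterm_cr; congr (_ * _); exact/(cphi _ _ _ _ lI mI gaI deI).
Qed.
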